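(* Let $A\in\mathbb R^{n\times n}$ be Hurwitz and let $L\in\mathbb R^{n\times m}$ have full column rank. Then there exist right-invertible matrices $P$ and $\overline P$ (with $n$ columns) and right inverses $P^\dagger$, $\overline P^\dagger$ (i.e. $PP^\dagger=I$, $\overline P\,\overline P^\dagger=I$) such that (C1) $P^\dagger P+\overline P^\dagger\overline P=I_n$; (C2) $PAP^\dagger$ and $\overline PA\overline P^\dagger$ are Hurwitz; (C3) $PL=0$ and $\overline PL$ is (square and) nonsingular.
   Context: A square real matrix is Hurwitz (stable) if all its eigenvalues have negative real part. *)

(* Defs.v *)
(* Real matrices are modelled as matrices over an arbitrary
   numClosedFieldType C (e.g. the complex numbers) whose entries are all real;
   eigenvalues are then the (complex) eigenvalues in C. *)
From HB Require Import structures.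
From mathcomp Require Import all_boot all_order all_algebra.
Set Implicit Arguments. Unset Strict Implicit. Unset Printing Implicit Defensive.
Import Order.TTheory GRing.Theory Num.Theory.
Local Open Scope ring_scope.

Definition real_mx (C : numClosedFieldType) (p q : nat) (M : 'M[C]_(p, q)) : Prop :=
  M \is a mxOver Num.real.

Definition hurwitz (C : numClosedFieldType) (k : nat) (M : 'M[C]_k) : Prop :=
  forall l : C, eigenvalue M l -> 'Re l < 0.

(* Main.v *)
Require Import Defs.
From HB Require Import structures.
From mathcomp Require Import all_boot all_order all_algebra.
From mathcomp Require Import sesquilinear spectral.
From mathcomp Require Import ring lra.
Set Implicit Arguments. Unset Strict Implicit. Unset Printing Implicit Defensive.
Import Order.TTheory GRing.Theory Num.Theory Num.Def.
Local Open Scope ring_scope.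

Notation hc M := (map_mx conjC (M^T)).
Section S.
Variable C : numClosedFieldType.


Lemma hcK m n (M : 'M[C]_(m,n)) : hc (hc M) = M.
Proof. by apply/matrixP=> i j; rewrite !mxE conjCK. Qed.

Lemma hcM m n p (M : 'M[C]_(m,n)) (N : 'M[C]_(n,p)) : hc (M *m N) = hc N *m hc M.
Proof. by rewrite trmx_mul map_mxM. Qed.

Lemma ker_row_free m n (M : 'M[C]_(m,n)) :
  (forall u : 'rV_m, u *m M = 0 -> u = 0) -> row_free M.
Proof.
move=> H; rewrite -kermx_eq0; apply/eqP/row_matrixP => i; rewrite row0.
by apply: H; rewrite -row_mul mulmx_ker row0.
Qed.

Lemma ker_unit n (M : 'M[C]_n) :
  (forall u : 'rV_n, u *m M = 0 -> u = 0) -> M \in unitmx.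
Proof. by move=> H; rewrite -row_free_unit; apply: ker_row_free. Qed.

Definition qf n (u : 'rV[C]_n) (M : 'M[C]_n) := (u *m M *m hc u) 0 0.

Lemma qf_pos_unit n (M : 'M[C]_n) :
  (forall u : 'rV_n, u != 0 -> 0 < qf u M) -> M \in unitmx.
Proof.
move=> H; apply: ker_unit => u uM; apply/eqP; apply/negP => /negP /H.
by rewrite /qf uM mul0mx mxE ltxx.
Qed.

Lemma qf_self n (y : 'rV[C]_n) : qf y 1%:M = \sum_i `|y 0 i| ^+ 2.
Proof.
rewrite /qf mulmx1 mxE; apply: eq_bigr => i _; by rewrite !mxE normCK.
Qed.

Lemma qfE n (y : 'rV[C]_n) M : qf y M = \sum_i \sum_j y 0 i * M i j * (y 0 j)^*.
Proof.
rewrite /qf mxE [RHS]exchange_big; apply: eq_bigr => j _.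
by rewrite !mxE big_distrl; apply: eq_bigr => i _; rewrite ?mxE.
Qed.

Lemma Re_le_norm (z : C) : 'Re z <= `|z|.
Proof.
apply: le_trans (leif_normC_Re_Creal z).
by apply: real_ler_norm; apply: Creal_Re.
Qed.

Lemma qf_bound n (N : 'M[C]_n) (M : C) (y : 'rV[C]_n) : 0 <= M ->
  (forall i j, `|N i j| <= M) ->
  'Re (qf y N) <= n%:R * M * \sum_i `|y 0 i| ^+ 2.
Proof.
move=> M0 HN.
apply: (le_trans (Re_le_norm _)); rewrite qfE.
apply: (le_trans (ler_norm_sum _ _ _)).
apply: (@le_trans _ _ (\sum_i \sum_j M * ((`|y 0 i| ^+ 2 + `|y 0 j| ^+ 2) / 2%:R))).
  apply: ler_sum => i _; apply: (le_trans (ler_norm_sum _ _ _)).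
  apply: ler_sum => j _; rewrite !normrM norm_conjC.
  rewrite mulrAC [M * _]mulrC; apply: ler_pM; rewrite ?mulr_ge0 ?normr_ge0 //.
  exact: (real_leif_mean_square (normr_real (y 0 i)) (normr_real (y 0 j))).1.
set a := fun i => `|y 0 i| ^+ 2.
have -> : \sum_i \sum_j M * ((a i + a j) / 2%:R) =
    M / 2%:R * (\sum_(i < n) \sum_(j < n) a i + \sum_(i < n) \sum_(j < n) a j).
  rewrite mulrDr !big_distrr -big_split; apply: eq_bigr => i _ /=.
  rewrite !big_distrr -big_split; apply: eq_bigr => j _ /=.
  by ring.
have S1 : \sum_(i < n) \sum_(j < n) a i = (\sum_i a i) *+ n.
  under eq_bigr => i _ do rewrite sumr_const card_ord.
  by rewrite sumrMnl.
have S2 : \sum_(i < n) \sum_(j < n) a j = (\sum_i a i) *+ n.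
  by rewrite sumr_const card_ord.
rewrite S1 S2 -mulr_natr.
rewrite le_eqVlt; apply/orP; left; apply/eqP.
field.
done.
Qed.

Lemma trig_eig n (T : 'M[C]_n) i : is_trig_mx T -> eigenvalue T (T i i).
Proof.
move=> Tt; rewrite eigenvalue_root_char char_poly_trig //; apply/rootP.
by rewrite horner_prod (bigD1 i) //= !hornerE subrr mul0r.
Qed.

Lemma pos_sum n (c : 'I_n -> C) (y : 'rV[C]_n) :
  (forall i, 0 < c i) -> y != 0 -> 0 < \sum_i c i * `|y 0 i| ^+ 2.
Proof.
move=> cp yn0.
have ge0 : forall i, true -> 0 <= c i * `|y 0 i| ^+ 2.
  by move=> i _; apply: mulr_ge0; [exact: ltW | apply: exprn_ge0].

rewrite lt0r sumr_ge0 ?andbT //.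
apply: contra yn0; rewrite psumr_eq0 //.
move=> /allP H; apply/eqP/rowP => i; rewrite mxE.
have /H := mem_index_enum i; rewrite implyTb mulf_eq0 (gt_eqF (cp i)) /=.
by rewrite sqrf_eq0 normr_eq0 => /eqP.
Qed.

Lemma le_sum1 n (F : 'I_n -> C) i : (forall j, 0 <= F j) -> F i <= \sum_j F j.
Proof. by move=> H; rewrite (bigD1 i) //= lerDl sumr_ge0. Qed.

Lemma qfD n (y : 'rV[C]_n) M1 M2 : qf y (M1 + M2) = qf y M1 + qf y M2.
Proof. by rewrite /qf mulmxDr mulmxDl mxE. Qed.

Lemma qf_diag n (y : 'rV[C]_n) (v : 'rV[C]_n) :
  qf y (diag_mx v) = \sum_i v 0 i * `|y 0 i| ^+ 2.
Proof.
rewrite /qf mul_mx_diag mxE; apply: eq_bigr => i _; rewrite !mxE normCK; ring.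
Qed.

Lemma choose_eps n (f : 'I_n -> C) (Kt : C) : (forall i, 0 < f i) -> 0 <= Kt ->
  exists e : C, [/\ 0 < e, e <= 1 & forall i, Kt * e < f i].
Proof.
move=> fp Kp.
set Sg := \sum_j (f j)^-1.
have Sg0 : 0 <= Sg by apply: sumr_ge0 => j _; rewrite invr_ge0 ltW.
set D := 1 + Kt * (1 + Sg).
have D1 : 1 <= D by rewrite lerDl mulr_ge0 // addr_ge0.
have D0 : 0 < D by apply: lt_le_trans D1.
exists D^-1; split; first by rewrite invr_gt0.
  by rewrite invf_le1.
move=> i; rewrite ltr_pdivrMr //.
have H1 : 1 <= f i * (1 + Sg).
  rewrite -[X in X <= _](divff (lt0r_neq0 (fp i))) ler_pM2l //.
  have hh : forall j, 0 <= (f j)^-1 by move=> j; rewrite invr_ge0 ltW.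
  apply: (le_trans (le_sum1 i hh)).
  by rewrite -/Sg lerDr ler01.
have -> : f i * D = f i + Kt * (f i * (1 + Sg)) by rewrite /D; ring.
by apply: ltr_pwDl => //; apply: ler_peMr.
Qed.

Lemma lyap_C n (A : 'M[C]_n) : (forall l, eigenvalue A l -> 'Re l < 0) ->
  exists Y : 'M[C]_n, hc Y = Y /\
    (forall u : 'rV_n, u != 0 -> 0 < qf u Y /\ 'Re (qf u (Y *m A)) < 0).
Proof.
case: n A => [|n] A hA.
  by exists 0; split; [apply/matrixP => i []|move=> u; rewrite thinmx0 eqxx].
have [U Uu] := Schur A (ltn0Sn n).
rewrite /similar_to /= conjymx // => Ut.
set T := U *m A *m _ in Ut.
have UU : U *m hc U = 1%:M by apply/unitarymxP.
have UtU : hc U *m U = 1%:M by apply: mulmx1C.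
have TU : T *m U = U *m A by rewrite /T -mulmxA UtU mulmx1.
clearbody T.
have hT : forall i, 'Re (T i i) < 0.
  move=> i; apply: hA; have /eigenvalueP [v vT vn0] := trig_eig i Ut.
  apply/eigenvalueP; exists (v *m U).
    by rewrite -mulmxA -TU mulmxA vT scalemxAl.
  apply: contra vn0 => /eqP vU; apply/eqP.
  by rewrite -(mulmx1 v) -UU mulmxA vU mul0mx.
pose f := fun i => - 'Re (T i i).
have fp : forall i, 0 < f i by move=> i; rewrite oppr_gt0.
pose K := \sum_i \sum_j `|T i j|.
have K0 : 0 <= K by apply: sumr_ge0 => i _; apply: sumr_ge0.
have [e [e0 e1 eK]] := choose_eps fp (mulr_ge0 (ler0n _ n.+1) K0).
pose S := diag_mx (\row_(i < n.+1) e ^+ i).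
pose Te := \matrix_(i, j) (T i j * e ^+ i / e ^+ j).
have en0 : e != 0 by apply: lt0r_neq0.
have STe : S *m T = Te *m S.
  apply/matrixP => i j; rewrite mul_diag_mx mul_mx_diag !mxE.
  by rewrite divfK ?expf_neq0 // mulrC.
pose W := S *m U.
have Wu : W \in unitmx.
  rewrite unitmx_mul (unitarymx_unit Uu) andbT unitmxE det_diag unitfE.
  by apply/prodf_neq0 => i _; rewrite mxE expf_neq0.
have WA : W *m A = Te *m W by rewrite /W -mulmxA -TU mulmxA STe mulmxA.
exists (hc W *m W); split.
  by rewrite hcM hcK.
move=> u un0; pose y := u *m hc W.
have hcWu : hc W \in unitmx by rewrite map_unitmx unitmx_tr.
have yn0 : y != 0.
  apply: contra un0 => /eqP y0; apply/eqP.
  by rewrite -(mulmxK hcWu u) -/y y0 mul0mx.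
have hy : hc y = W *m hc u by rewrite hcM hcK.
have E1 : qf u (hc W *m W) = qf y 1%:M by rewrite /qf mulmx1 hy !mulmxA.
have E2 : qf u (hc W *m W *m A) = qf y Te.
  by rewrite /qf hy -[hc W *m W *m A]mulmxA WA !mulmxA.
split.
  rewrite E1 qf_self; under eq_bigr do rewrite -[`|_| ^+ 2]mul1r.
  by apply: pos_sum => // i; exact: ltr01.
rewrite E2.
have -> : Te = diag_mx (\row_i T i i) + (Te - diag_mx (\row_i T i i)).
  by rewrite addrC subrK.
rewrite qfD raddfD qf_diag raddf_sum /=.
set N := Te - _.
have Nb : forall i j, `|N i j| <= K * e.
  move=> i j; rewrite !mxE.
  have KT : `|T i j| <= K.
    apply: (le_trans (le_sum1 (F := fun j => `|T i j|) j (fun=> normr_ge0 _))).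
    by apply: (le_sum1 (F := fun i => \sum_j `|T i j|) i) => k; apply: sumr_ge0.
  have Ke0 : 0 <= K * e by rewrite mulr_ge0 // ltW.
  case: (ltngtP i j) => [lt|gt|eq].
  - have nij : (i == j) = false by rewrite -val_eqE /= ltn_eqF.
    by rewrite nij mulr0n subr0 (is_trig_mxP Ut i j lt) !mul0r normr0.
  - have nij : (i == j) = false by rewrite -val_eqE /= gtn_eqF.
    rewrite nij mulr0n subr0 -mulrA -expfB // normrM.
    rewrite (ger0_norm (exprn_ge0 _ (ltW e0))).
    apply: ler_pM; [exact: normr_ge0 | exact: (exprn_ge0 _ (ltW e0)) | exact: KT | ].
    have ij : (0 < i - j)%N by rewrite subn_gt0.
    rewrite -(prednK ij) exprS; apply: ler_piMr; [exact: ltW | exact: exprn_ile1 (ltW e0) e1].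
  - have ij : i = j by apply: val_inj.
    by subst j; rewrite eqxx mulr1n mulfK ?expf_neq0 // subrr normr0.
have := qf_bound y (mulr_ge0 K0 (ltW e0)) Nb => H.
apply: (le_lt_trans (lerD (lexx _) H)).
have -> : \sum_i 'Re ((\row_i T i i) 0 i * `|y 0 i| ^+ 2) +
     n.+1%:R * (K * e) * \sum_i `|y 0 i| ^+ 2 =
     - \sum_i (f i - n.+1%:R * K * e) * `|y 0 i| ^+ 2.
  rewrite big_distrr -sumrN -big_split; apply: eq_bigr => i _ /=.
  rewrite mxE ReMr ?rpredX ?normr_real // /f; ring.
rewrite oppr_lt0; apply: pos_sum => // i.
by rewrite subr_gt0.
Qed.

Lemma conjK_mx m n (M : 'M[C]_(m, n)) : map_mx conjC (map_mx conjC M) = M.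
Proof. by apply/matrixP => i j; rewrite !mxE conjCK. Qed.

Lemma qf_conj n (u : 'rV[C]_n) M :
  qf u (map_mx conjC M) = (qf (map_mx conjC u) M)^*.
Proof.
have mE : forall X : 'M[C]_1, (X 0 0)^* = (map_mx conjC X) 0 0 by move=> X; rewrite mxE.
rewrite /qf mE !map_mxM.
by rewrite !conjK_mx map_trmx.
Qed.

Lemma real_of_fix m n (M : 'M[C]_(m, n)) : map_mx conjC M = M -> real_mx M.
Proof.
move=> H; apply/mxOverP => i j; apply/CrealP.
by have /matrixP/(_ i j) := H; rewrite mxE.
Qed.

Lemma fix_of_real m n (M : 'M[C]_(m, n)) : real_mx M -> map_mx conjC M = M.
Proof. by move=> H; apply: realmxC. Qed.

Lemma hc_fix m n (M : 'M[C]_(m, n)) : map_mx conjC M = M -> hc M = M^T.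
Proof. by move=> H; rewrite -map_trmx H. Qed.

Lemma lyap_R n (A : 'M[C]_n) : map_mx conjC A = A ->
  (forall l, eigenvalue A l -> 'Re l < 0) ->
  exists Y : 'M[C]_n, [/\ map_mx conjC Y = Y, Y^T = Y &
    forall u : 'rV_n, u != 0 -> 0 < qf u Y /\ 'Re (qf u (Y *m A)) < 0].
Proof.
move=> Ar hA; have [Y0 [hY0 HY0]] := lyap_C hA.
have Y0T : Y0^T = map_mx conjC Y0 by rewrite -[in RHS]hY0 conjK_mx.
exists (Y0 + map_mx conjC Y0); split.
- by rewrite map_mxD conjK_mx addrC.
- by rewrite raddfD /= Y0T map_trmx Y0T conjK_mx addrC.
move=> u un0; have [p1 r1] := HY0 u un0.
have u'n0 : map_mx conjC u != 0.
  apply: contra un0 => /eqP h; apply/eqP; by rewrite -[u]conjK_mx h map_mx0.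
have [p2 r2] := HY0 _ u'n0.
rewrite mulmxDl -{2}Ar -map_mxM !qfD !qf_conj; split.
  by rewrite conj_Creal ?gtr0_real // addr_gt0.
rewrite raddfD /= Re_conj.
by apply: (@lt_le_trans _ _ (0 + 0)); [apply: ltrD | rewrite addr0].
Qed.

Lemma map_rowsub m m' n (f : 'I_m' -> 'I_m) (M : 'M[C]_(m,n)) :
  map_mx conjC (rowsub f M) = rowsub f (map_mx conjC M).
Proof. by apply/matrixP => i j; rewrite !mxE. Qed.

Lemma fin n (u : 'rV[C]_n) Y A l : 0 < qf u Y -> 'Re (qf u (Y *m A)) < 0 ->
  qf u (Y *m A) = l * qf u Y -> 'Re l < 0.
Proof. by move=> p r e; move: r; rewrite e (ReMr (gtr0_real p)) pmulr_llt0. Qed.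
End S.

Theorem lemma2 (C : numClosedFieldType) (n m : nat)
    (A : 'M[C]_n) (L : 'M[C]_(n, m)) :
  real_mx A -> real_mx L -> hurwitz A -> \rank L = m ->
  exists (p : nat) (P : 'M[C]_(p, n)) (Pd : 'M[C]_(n, p))
         (Pb : 'M[C]_(m, n)) (Pbd : 'M[C]_(n, m)),
    [/\ real_mx P, real_mx Pd, real_mx Pb & real_mx Pbd] /\
    P *m Pd = 1%:M /\ Pb *m Pbd = 1%:M /\
    (* (C1) *) Pd *m P + Pbd *m Pb = 1%:M /\
    (* (C2) *) hurwitz (P *m A *m Pd) /\ hurwitz (Pb *m A *m Pbd) /\
    (* (C3) *) P *m L = 0 /\ Pb *m L \in unitmx.
Proof.
move=> Ar Lr hA rL.
have Ac := fix_of_real Ar; have Lc := fix_of_real Lr.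
have [Y [Yc YT HY]] := lyap_R Ac hA.
have Yu : Y \in unitmx := qf_pos_unit (fun u h => (HY u h).1).
pose X := invmx Y.
have XY : X *m Y = 1%:M by apply: mulVmx.
have YX : Y *m X = 1%:M by apply: mulmxV.
have Xc : map_mx conjC X = X by rewrite map_invmx Yc.
have XT : X^T = X by rewrite trmx_inv YT.
have hcX : hc X = X by rewrite hc_fix // XT.
have hcL : hc L = L^T := hc_fix Lc.
have hcLT : hc (L^T) = L by rewrite trmxK Lc.
have LTfree : row_free (L^T) by rewrite /row_free mxrank_tr rL.
pose M := L^T *m Y *m L.
have Mc : map_mx conjC M = M by rewrite !map_mxM -map_trmx Lc Yc.
have Mu : M \in unitmx.
  apply: ker_unit => u uM.
  have q0 : qf (u *m L^T) Y = 0.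
    have -> : qf (u *m L^T) Y = (u *m M *m hc u) 0 0.
      by rewrite /qf hcM hcLT /M !mulmxA.
    by rewrite uM mul0mx mxE.
  case: (eqVneq (u *m L^T) 0) => [h|h].
    by apply/eqP; rewrite -(mulmx_free_eq0 _ LTfree) h.
  by have := (HY _ h).1; rewrite q0 ltxx.
pose G := invmx M.
have GM : G *m M = 1%:M by apply: mulVmx.
have MG : M *m G = 1%:M by apply: mulmxV.
pose Pb := L^T *m Y. pose Pbd := L *m G.
have PbL : Pb *m L = M by [].
pose Q := 1%:M - Pbd *m Pb.
have QL : Q *m L = 0.
  by rewrite mulmxBl mul1mx -mulmxA PbL /Pbd -mulmxA GM mulmx1 subrr.
pose P := rowsub (maxrankfun Q) Q.
have PL : P *m L = 0 by rewrite /P rowsubE -mulmxA QL mulmx0.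
have Pfree : row_free P := maxrowsub_free Q.
have Qc : map_mx conjC Q = Q.
  by rewrite map_mxB map_mx1 !map_mxM map_invmx Mc -map_trmx Lc Yc.
have Pc : map_mx conjC P = P.
  by rewrite /P map_rowsub Qc.
have hcP : hc P = P^T := hc_fix Pc.
pose N := P *m X *m P^T.
have Nu : N \in unitmx.
  apply: ker_unit => u uN.
  pose w := u *m P; pose v := w *m X.
  have q0 : qf v Y = 0.
    have -> : qf v Y = (u *m N *m hc u) 0 0.
      rewrite /qf /v /w !hcM hcX hcP /N !mulmxA.
      by rewrite -(mulmxA _ X Y) XY mulmx1.
    by rewrite uN mul0mx mxE.
  case: (eqVneq v 0) => [h|h].
    apply/eqP; rewrite -(mulmx_free_eq0 _ Pfree) -/w.
    by rewrite -[w]mulmx1 -XY mulmxA -/v h mul0mx.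
  by have := (HY _ h).1; rewrite q0 ltxx.
pose H := invmx N.
pose Pd := X *m P^T *m H.
have E1 : P *m Pd = 1%:M by rewrite /Pd !mulmxA -/N mulmxV.
have E2 : Pb *m Pbd = 1%:M by rewrite /Pbd mulmxA PbL MG.
have E3 : P *m Pbd = 0 by rewrite /Pbd mulmxA PL mul0mx.
have E4 : Pb *m Pd = 0.
  by rewrite /Pb /Pd !mulmxA -(mulmxA _ Y X) YX mulmx1 -trmx_mul PL trmx0 !mul0mx.
have [D hD] : exists D, Q = D *m P.
  have /eqmxP/andP [_ h] := eq_maxrowsub Q.
  by move/submxP: h => [D hD]; exists D.
have E5 : Pd *m P + Pbd *m Pb = 1%:M.
  have one : 1%:M = D *m P + Pbd *m Pb by rewrite -hD /Q subrK.
  have PE : P *m (Pd *m P + Pbd *m Pb) = P.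
    by rewrite mulmxDr (mulmxA P Pd) (mulmxA P Pbd) E1 E3 mul1mx mul0mx addr0.
  have PbE : Pb *m (Pd *m P + Pbd *m Pb) = Pb.
    by rewrite mulmxDr (mulmxA Pb Pd) (mulmxA Pb Pbd) E4 E2 mul1mx mul0mx add0r.
  by rewrite -[LHS]mul1mx {1}one mulmxDl -(mulmxA D P) -(mulmxA Pbd Pb) PE PbE -one.
exists (\rank Q), P, Pd, Pb, Pbd.
split.
  split; apply: real_of_fix => //.
  - by rewrite /Pd /H /N !map_mxM map_invmx ?map_mxM -?map_trmx Pc Yc map_invmx !map_mxM -map_trmx Pc Xc.
  - by rewrite /Pb map_mxM -map_trmx Lc Yc.
  - by rewrite /Pbd map_mxM map_invmx Mc Lc.
have PbXPt : Pb *m X *m P^T = 0.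
  by rewrite /Pb -(mulmxA _ Y X) YX mulmx1 -trmx_mul PL trmx0.
have MU : Pb *m L \in unitmx by [].
have PbE : Pb = L^T *m Y by [].
clearbody Pd Pbd Pb P X.
split => //; split => //; split => //.
split.
  move=> l /eigenvalueP [v vM vn0].
  move Ew : (v *m P) => w; move Eu : (w *m X) => u.
  have wn0 : w != 0.
    apply: contra vn0 => /eqP h; apply/eqP.
    by rewrite -[v]mulmx1 -E1 mulmxA Ew h mul0mx.
  have un0 : u != 0.
    apply: contra wn0 => /eqP h; apply/eqP.
    by rewrite -[w]mulmx1 -XY mulmxA Eu h mul0mx.
  have hcu : hc u = X *m P^T *m hc v by rewrite -Eu -Ew !hcM hcX hcP mulmxA.
  have vM' : v *m P *m A *m Pd = l *: v by rewrite -vM !mulmxA.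
  have wA : w *m A = l *: w + (v *m P *m A *m Pbd) *m Pb.
    rewrite -[w *m A]mulmx1 -E5 mulmxDr !mulmxA -Ew.
    by rewrite vM' -scalemxAl.
  have [pos neg] := HY u un0.
  apply: (fin pos neg).
  have e1 : u *m (Y *m A) *m hc u = w *m A *m (X *m P^T *m hc v).
    by rewrite hcu -Eu !mulmxA -(mulmxA w X Y) XY mulmx1.
  have e2 : u *m Y *m hc u = w *m (X *m P^T *m hc v).
    by rewrite hcu -Eu !mulmxA -(mulmxA w X Y) XY mulmx1.
  rewrite /qf e1 e2 wA mulmxDl -scalemxAl.
  have Z : v *m P *m A *m Pbd *m Pb *m (X *m P^T *m hc v) = 0.
    by rewrite !mulmxA -(mulmxA _ Pb X) -(mulmxA _ (Pb *m X) P^T) PbXPt mulmx0 mul0mx.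
  by rewrite Z addr0 mxE.
split => //.
move=> l /eigenvalueP [v vM vn0].
move Eu : (v *m L^T) => u; move Ew : (u *m Y) => w.
have wE : w = v *m Pb by rewrite -Ew -Eu PbE mulmxA.
have un0 : u != 0.
  apply: contra vn0 => /eqP h; apply/eqP.
  by rewrite -[v]mulmx1 -E2 mulmxA -wE -Ew h !mul0mx.
have hcu : hc u = L *m hc v by rewrite -Eu hcM hcLT.
have vM' : v *m Pb *m A *m Pbd = l *: v by rewrite -vM !mulmxA.
have wA : w *m A = (w *m A *m Pd) *m P + l *: w.
  rewrite {1}(_ : w *m A = w *m A *m (Pd *m P + Pbd *m Pb)); last by rewrite E5 mulmx1.
  rewrite mulmxDr !mulmxA; congr (_ + _).
  by rewrite wE vM' -scalemxAl.
have [pos neg] := HY u un0.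
apply: (fin pos neg).
have e1 : u *m (Y *m A) *m hc u = w *m A *m (L *m hc v).
  by rewrite hcu -Ew !mulmxA.
have e2 : u *m Y *m hc u = w *m (L *m hc v).
  by rewrite hcu -Ew !mulmxA.
rewrite /qf e1 e2 wA mulmxDl -scalemxAl.
have Z : w *m A *m Pd *m P *m (L *m hc v) = 0.
  by rewrite mulmxA -(mulmxA _ P L) PL mulmx0 mul0mx.
by rewrite Z add0r mxE.
Qed.
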